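(* Let $f:[0,1]^n \to \mathbb{R}_+$ be a differentiable DR-submodular function and $\vec{x}^* \in [0,1]^n$ a maximizer of $f$. Consider a differentiable trajectory $(\vec{x}^{(t)},\vec{y}^{(t)})$ with $\vec{x}^{(t)} \le \vec{y}^{(t)}$ that follows the update rule: for every $t$ and every coordinate $i$ with $\nabla_i f(\vec{x}^{(t)}) > 0$ and $\nabla_i f(\vec{y}^{(t)}) < 0$, $$\dot{x}^{(t)}_i = \frac{\nabla_i f(\vec{x}^{(t)})}{\nabla_i f(\vec{x}^{(t)}) - \nabla_i f(\vec{y}^{(t)})}, \qquad \dot{y}^{(t)}_i = \frac{\nabla_i f(\vec{y}^{(t)})}{\nabla_i f(\vec{x}^{(t)}) - \nabla_i f(\vec{y}^{(t)})},$$ and $\dot{x}^{(t)}_i = \dot{y}^{(t)}_i = 0$ for every other coordinate $i$. Let $\vec{p}^{(t)}$ be the projection of $\vec{x}^*$ onto the box $[\vec{x}^{(t)},\vec{y}^{(t)}]$, i.e. $p^{(t)}_i = \min\{\max\{x^*_i, x^{(t)}_i\}, y^{(t)}_i\}$. Then at every time $t$ (where the derivatives exist) $$\frac12\left(\langle \nabla f(\vec{x}^{(t)}), \dot{\vec{x}}^{(t)}\rangle + \langle \nabla f(\vec{y}^{(t)}), \dot{\vec{y}}^{(t)}\rangle\right) + \langle \nabla f(\vec{p}^{(t)}), \dot{\vec{p}}^{(t)}\rangle \ge 0.$$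
   Context: A function $f:[0,1]^n \to \mathbb{R}_+$ is DR-submodular if for all $\vec{x}\le\vec{y}$ in $[0,1]^n$ (coordinate-wise), all $i\in[n]$ and $\delta\in[0,1]$ with $\vec{x}+\delta\vec{1}_{\{i\}}, \vec{y}+\delta\vec{1}_{\{i\}} \in [0,1]^n$, $f(\vec{x}+\delta\vec{1}_{\{i\}})-f(\vec{x}) \ge f(\vec{y}+\delta\vec{1}_{\{i\}})-f(\vec{y})$. For differentiable $f$ this is equivalent to $\nabla f(\vec{x}) \ge \nabla f(\vec{y})$ whenever $\vec{x}\le\vec{y}$. Dots denote time derivatives. *)

(* Defs.v *)
From HB Require Import structures.
From mathcomp Require Import all_boot all_order all_algebra.
From mathcomp Require Import all_classical all_reals all_analysis.
Set Implicit Arguments. Unset Strict Implicit. Unset Printing Implicit Defensive.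
Import Order.TTheory GRing.Theory Num.Theory.
Import numFieldNormedType.Exports.
Local Open Scope ring_scope.

(* Vectors of R^n are row vectors 'rV[R]_n; coordinate i of v is v ord0 i. *)

Definition in_box {R : realType} {n : nat} (v : 'rV[R]_n) : Prop :=
  forall i : 'I_n, 0 <= v ord0 i <= 1.

Definition vle {R : realType} {n : nat} (u v : 'rV[R]_n) : Prop :=
  forall i : 'I_n, u ord0 i <= v ord0 i.

Definition unitv {R : realType} {n : nat} (i : 'I_n) : 'rV[R]_n := delta_mx ord0 i.

Definition DR_submodular {R : realType} {n : nat} (f : 'rV[R]_n -> R) : Prop :=
  forall (x y : 'rV[R]_n) (i : 'I_n) (d : R),
    in_box x -> in_box y -> vle x y -> 0 <= d <= 1 ->
    in_box (x + d *: unitv i) -> in_box (y + d *: unitv i) ->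
    f (x + d *: unitv i) - f x >= f (y + d *: unitv i) - f y.

Definition grad {R : realType} {n : nat} (f : 'rV[R]_n -> R) (x : 'rV[R]_n) (i : 'I_n) : R :=
  'D_(unitv i) f x.

Definition grad_dot {R : realType} {n : nat} (f : 'rV[R]_n -> R) (x v : 'rV[R]_n) : R :=
  \sum_(i < n) grad f x i * v ord0 i.

Definition proj_box {R : realType} {n : nat} (xs x y : 'rV[R]_n) : 'rV[R]_n :=
  \row_i Num.min (Num.max (xs ord0 i) (x ord0 i)) (y ord0 i).

(* Main.v *)
Require Import Defs.
From HB Require Import structures.
From mathcomp Require Import all_boot all_order all_algebra.
From mathcomp Require Import all_classical all_reals all_analysis.
From mathcomp Require Import ring lra.
Import Order.TTheory GRing.Theory Num.Theory.
Import numFieldNormedType.Exports.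
Local Open Scope ring_scope.


Lemma unitvE (R : realType) n (i j : 'I_n) : (unitv i : 'rV[R]_n) ord0 j = (j == i)%:R.
Proof. by rewrite /unitv mxE eqxx. Qed.

Lemma in_box_add (R : realType) n (z : 'rV[R]_n) i d :
  in_box z -> 0 <= z ord0 i + d <= 1 -> in_box (z + d *: unitv i).
Proof.
move=> bz hd j; rewrite !mxE eqxx /=.
case: eqP => [->|_]; first by rewrite mulr1.
by rewrite mulr0 addr0; apply: bz.
Qed.

Lemma vle_add (R : realType) n (z w : 'rV[R]_n) i d :
  vle z w -> vle (z + d *: unitv i) (w + d *: unitv i).
Proof. by move=> zw j; rewrite !mxE lerD2r. Qed.

Lemma dright (R : realType) (V : topologicalType) (g : R -> V) (l : V) :
  (g @ 0^' --> l -> g @ 0^'+ --> l)%classic.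
Proof.
move=> H; apply: cvg_trans H; apply: cvg_fmap2.
by apply: within_subset => y /= /lt0r_neq0.
Qed.

Lemma dleft (R : realType) (V : topologicalType) (g : R -> V) (l : V) :
  (g @ 0^' --> l -> g @ 0^'- --> l)%classic.
Proof.
move=> H; apply: cvg_trans H; apply: cvg_fmap2.
by apply: within_subset => y /= /ltr0_neq0.
Qed.

Lemma monoR (R : realType) n (f : 'rV[R]_n -> R) z w i :
  DR_submodular f -> in_box z -> in_box w -> vle z w -> w ord0 i < 1 ->
  derivable f z (unitv i) -> derivable f w (unitv i) -> grad f w i <= grad f z i.
Proof.
move=> DR bz bw zw wi dz dw.
rewrite /grad /derive.
apply: (ler_cvg_to (@dright _ _ _ _ dw) (@dright _ _ _ _ dz)).
have e0 : 0 < 1 - w ord0 i by lra.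
near=> h.
have h0 : 0 < h by near: h; exact: nbhs_right_gt.
have h1 : h < 1 - w ord0 i by near: h; exact: nbhs_right_lt.
have zi := zw i.
have [zi0 zi1] := andP (bz i).
have [wi0 wi1] := andP (bw i).
have := DR z w i h bz bw zw _ _ _.
rewrite /= ![h *: unitv i + _]addrC => H.
rewrite !/GRing.scale /=.
apply: ler_wpM2l; first by rewrite invr_ge0 ltW.
apply: H.
- by apply/andP; split; lra.
- by apply: in_box_add => //; apply/andP; split; lra.
- by apply: in_box_add => //; apply/andP; split; lra.
Unshelve. all: end_near.
Qed.

Lemma monoL (R : realType) n (f : 'rV[R]_n -> R) z w i :
  DR_submodular f -> in_box z -> in_box w -> vle z w -> 0 < z ord0 i ->
  derivable f z (unitv i) -> derivable f w (unitv i) -> grad f w i <= grad f z i.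
Proof.
move=> DR bz bw zw zi dz dw.
rewrite /grad /derive.
apply: (ler_cvg_to (@dleft _ _ _ _ dw) (@dleft _ _ _ _ dz)).
near=> h.
have h0 : h < 0 by near: h; exact: nbhs_left_lt.
have h1 : - z ord0 i < h by near: h; apply: nbhs_left_gt; lra.
have zi' := zw i.
have [zi0 zi1] := andP (bz i).
have [wi0 wi1] := andP (bw i).
have E : forall v : 'rV[R]_n, v + h *: unitv i + (- h) *: unitv i = v.
  by move=> v; rewrite -addrA -scalerDl subrr scale0r addr0.
have bz' : in_box (z + h *: unitv i).
  by apply: in_box_add => //; apply/andP; split; lra.
have bw' : in_box (w + h *: unitv i).
  by apply: in_box_add => //; apply/andP; split; lra.
have hd : 0 <= - h <= 1 by apply/andP; split; lra.
have H := DR _ _ i (- h) bz' bw' (@vle_add _ _ _ _ i h zw) hd.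
rewrite !E in H.
have {H} H := H bz bw.
rewrite /= ![h *: unitv i + _]addrC.
rewrite !/GRing.scale /=.
apply: ler_wnM2l; first by rewrite invr_le0 ltW.
lra.
Unshelve. all: end_near.
Qed.

Lemma mono (R : realType) n (f : 'rV[R]_n -> R) z w i :
  DR_submodular f -> (forall u, in_box u -> differentiable f u) ->
  in_box z -> in_box w -> vle z w -> grad f w i <= grad f z i.
Proof.
move=> DR df bz bw zw.
have dv u : in_box u -> derivable f u (unitv i) by move=> bu; apply: diff_derivable; apply: df.
have [zi0 zi1] := andP (bz i).
have [wi0 wi1] := andP (bw i).
have zwi := zw i.
case: (ltP (w ord0 i) 1) => wi; first by apply: monoR => //; apply: dv.
case: (ltP 0 (z ord0 i)) => zi; first by apply: monoL => //; apply: dv.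
pose m := z + (1/2 : R) *: unitv i.
have mi : m ord0 i = 1/2.
  by rewrite !mxE !eqxx /= ?mulr1n ?mulr1; lra.
have bm : in_box m by apply: in_box_add => //; apply/andP; split; lra.
have zm : vle z m.
  by move=> j; rewrite !mxE eqxx /=; case: eqP => _ /=; rewrite ?mulr1n ?mulr0n ?mulr1 ?mulr0; lra.
have mw : vle m w.
  move=> j; rewrite !mxE eqxx /=; case: eqP => [->|_] /=; rewrite ?mulr1n ?mulr0n ?mulr1 ?mulr0 ?addr0 //.
  lra.
apply: (@le_trans _ _ (grad f m i)).
- by apply: monoL => //; [rewrite mi; lra | apply: dv | apply: dv].
- by apply: monoR => //; [rewrite mi; lra | apply: dv | apply: dv].
Qed.




Lemma clamp_ub (R : realFieldType) (c u v u' v' : R) :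
  Num.min (Num.max c u') v' - Num.min (Num.max c u) v <=
  Num.max (u' - u) 0 + Num.max (v' - v) 0.
Proof.
rewrite /Num.min /Num.max /Order.min /Order.max.
case: (ltP c u') => ?; case: (ltP c u) => ?;
case: (ltP (u' - u) 0) => ?; case: (ltP (v' - v) 0) => ?;
repeat (case: ltP => ?); lra.
Qed.
Lemma clamp_lb (R : realFieldType) (c u v u' v' : R) :
  Num.min (u' - u) 0 + Num.min (v' - v) 0 <=
  Num.min (Num.max c u') v' - Num.min (Num.max c u) v.
Proof.
rewrite /Num.min /Num.max /Order.min /Order.max.
case: (ltP c u') => ?; case: (ltP c u) => ?;
case: (ltP (u' - u) 0) => ?; case: (ltP (v' - v) 0) => ?;
repeat (case: ltP => ?); lra.
Qed.

Lemma max0E (R : realFieldType) (u : R) : Num.max u 0 = (u + `|u|) / 2.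
Proof.
rewrite /Num.max /Order.max; case: ltP => h.
  by rewrite ltr0_norm //; lra.
by rewrite ger0_norm //; lra.
Qed.

Lemma min0E (R : realFieldType) (u : R) : Num.min u 0 = (u - `|u|) / 2.
Proof.
rewrite /Num.min /Order.min; case: ltP => h.
  by rewrite ltr0_norm //; lra.
by rewrite ger0_norm //; lra.
Qed.

Lemma cvcoord (R : realType) n (Z : R -> 'rV[R]_n) t i :
  derivable Z t 1 ->
  ((fun h => h^-1 * (Z (h + t) ord0 i - Z t ord0 i)) @ 0^'+ --> derive1 Z t ord0 i)%classic.
Proof.
move=> dZ; rewrite derive1E; apply: dright.
have H := @continuous_cvg _ _ _ _ _ _ (fun M : 'rV[R]_n => M ord0 i) _ (@coord_continuous R 1 n ord0 i _) dZ.
pose q := fun h : R => h^-1 *: ((Z \o shift t) (h *: 1) - Z t).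
have -> : (fun h => h^-1 * (Z (h + t) ord0 i - Z t ord0 i)) = (fun M : 'rV[R]_n => M ord0 i) \o q.
  apply/funext => h; rewrite /q /= !mxE /=.
  by rewrite [h%:A]mulr1.
exact: (H (dnbhs_filter _)).
Qed.

Lemma pbound (R : realType) n (X Y : R -> 'rV[R]_n) (xs : 'rV[R]_n) t i :
  derivable X t 1 -> derivable Y t 1 ->
  derivable (fun s => proj_box xs (X s) (Y s)) t 1 ->
  forall dx dy dp, dx = derive1 X t ord0 i -> dy = derive1 Y t ord0 i ->
  dp = derive1 (fun s => proj_box xs (X s) (Y s)) t ord0 i ->
  (dx - `|dx|) / 2 + (dy - `|dy|) / 2 <= dp <= (dx + `|dx|) / 2 + (dy + `|dy|) / 2.
Proof.
move=> dX dY dP dx dy dp -> -> ->.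
have cx := @cvcoord _ _ _ _ i dX.
have cy := @cvcoord _ _ _ _ i dY.
have cp := @cvcoord _ _ _ _ i dP.
set qx := (fun h => _) in cx.
set qy := (fun h => _) in cy.
set qp := (fun h => _) in cp.
apply/andP; split.
- have ax : ((fun h => (qx h - `|qx h|) / 2) @ 0^'+ -->
     (derive1 X t ord0 i - `|derive1 X t ord0 i|) / 2)%classic.
    apply: cvgMr_tmp.
    apply: (cvgB cx).
    exact: (cvg_norm cx).
  have ay : ((fun h => (qy h - `|qy h|) / 2) @ 0^'+ -->
     (derive1 Y t ord0 i - `|derive1 Y t ord0 i|) / 2)%classic.
    apply: cvgMr_tmp.
    apply: (cvgB cy).
    exact: (cvg_norm cy).
  apply: (ler_cvg_to (cvgD ax ay) cp).
  near=> h.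
  have h0 : 0 < h by near: h; exact: nbhs_right_gt.
  set a := X (h + t) ord0 i - X t ord0 i.
  set b := Y (h + t) ord0 i - Y t ord0 i.
  have H := @clamp_lb _ (xs ord0 i) (X t ord0 i) (Y t ord0 i) (X (h + t) ord0 i) (Y (h + t) ord0 i).
  rewrite !min0E -/a -/b in H.
  have hi : 0 <= h^-1 by rewrite invr_ge0 ltW.
  have := ler_wpM2l hi H.
  have E : forall c, `|h^-1 * c| = h^-1 * `|c|.
    by move=> c; rewrite normrM gtr0_norm // invr_gt0.
  have key : forall c d e : R, c = d -> d <= e -> c <= e by move=> c d e ->.
  move=> H2; rewrite /qp !mxE; apply: (key _ _ _ _ H2).
  transitivity ((qx h - `|qx h|) / 2 + (qy h - `|qy h|) / 2).
    reflexivity.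
  rewrite /qx /qy -/a -/b !E; ring.
have ax : ((fun h => (qx h + `|qx h|) / 2) @ 0^'+ -->
     (derive1 X t ord0 i + `|derive1 X t ord0 i|) / 2)%classic.
    apply: cvgMr_tmp.
    apply: (cvgD cx).
    exact: (cvg_norm cx).
  have ay : ((fun h => (qy h + `|qy h|) / 2) @ 0^'+ -->
     (derive1 Y t ord0 i + `|derive1 Y t ord0 i|) / 2)%classic.
    apply: cvgMr_tmp.
    apply: (cvgD cy).
    exact: (cvg_norm cy).
  apply: (ler_cvg_to cp (cvgD ax ay)).
  near=> h.
  have h0 : 0 < h by near: h; exact: nbhs_right_gt.
  set a := X (h + t) ord0 i - X t ord0 i.
  set b := Y (h + t) ord0 i - Y t ord0 i.
  have H := @clamp_ub _ (xs ord0 i) (X t ord0 i) (Y t ord0 i) (X (h + t) ord0 i) (Y (h + t) ord0 i).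
  rewrite !max0E -/a -/b in H.
  have hi : 0 <= h^-1 by rewrite invr_ge0 ltW.
  have := ler_wpM2l hi H.
  have E : forall c, `|h^-1 * c| = h^-1 * `|c|.
    by move=> c; rewrite normrM gtr0_norm // invr_gt0.
  have key : forall c d e : R, e = d -> c <= d -> c <= e by move=> c d e ->.
  move=> H2; rewrite /qp !mxE; apply: (key _ _ _ _ H2).
  transitivity ((qx h + `|qx h|) / 2 + (qy h + `|qy h|) / 2).
    reflexivity.
  rewrite /qx /qy -/a -/b !E; ring.
Unshelve. all: end_near.
Qed.


Lemma coord_ineq (R : realFieldType) (a b c dx dy dp : R) :
  (if (0 < a) && (b < 0) then dx = a / (a - b) /\ dy = b / (a - b) else dx = 0 /\ dy = 0) ->
  ((0 < a) && (b < 0) -> b <= c <= a) ->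
  (dx - `|dx|) / 2 + (dy - `|dy|) / 2 <= dp <= (dx + `|dx|) / 2 + (dy + `|dy|) / 2 ->
  0 <= (a * dx + b * dy) / 2 + c * dp.
Proof.
case: ifP => [/andP[a0 b0] [-> ->] /(_ isT)|_ [-> ->] _].
- move=> /andP[cb ca] /andP[l u].
  have D0 : 0 < a - b by lra.
  set w := (a - b)^-1.
  have w0 : 0 < w by rewrite invr_gt0.
  have x0 : 0 < a * w by rewrite mulr_gt0.
  have y0 : b * w < 0 by rewrite pmulr_llt0.
  move: l u; rewrite -[(a - b)^-1]/w (gtr0_norm x0) (ltr0_norm y0) => l u.
  have l' : b * w <= dp by lra.
  have u' : dp <= a * w by lra.
  have hc : a * (b * w) <= c * dp.
    case: (lerP 0 c) => c0.
    + have h1 := ler_wpM2l c0 l'.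
      have h2 : 0 <= (a - c) * (- (b * w)) by apply: mulr_ge0; lra.
      nra.
    + have h1 := ler_wnM2l (ltW c0) u'.
      have h2 : 0 <= (c - b) * (a * w) by apply: mulr_ge0; lra.
      nra.
  have h3 : 0 <= (a + b) ^+ 2 * w by apply: mulr_ge0; [exact: sqr_ge0 | exact: ltW].
  rewrite expr2 in h3.
  nra.
- rewrite normr0 => /andP[l u].
  have -> : dp = 0 by lra.
  lra.
Qed.

Lemma clamp_in (R : realFieldType) (c u v : R) :
  u <= v -> u <= Num.min (Num.max c u) v <= v.
Proof.
move=> uv; rewrite /Num.min /Num.max /Order.min /Order.max.
case: (ltP c u) => ?; case: ltP => ?; apply/andP; split; lra.
Qed.

Theorem lemma4 (R : realType) (n : nat) (f : 'rV[R]_n -> R) (xs : 'rV[R]_n)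
  (x y : R -> 'rV[R]_n) (t : R) :
  (forall z, in_box z -> 0 <= f z) ->
  (forall z, in_box z -> differentiable f z) ->
  DR_submodular f ->
  in_box xs -> (forall z, in_box z -> f z <= f xs) ->
  in_box (x t) -> in_box (y t) -> vle (x t) (y t) ->
  derivable x t 1 -> derivable y t 1 ->
  (forall i : 'I_n,
     let a := grad f (x t) i in
     let b := grad f (y t) i in
     if (0 < a) && (b < 0) then
       (derive1 x t) ord0 i = a / (a - b) /\ (derive1 y t) ord0 i = b / (a - b)
     else
       (derive1 x t) ord0 i = 0 /\ (derive1 y t) ord0 i = 0) ->
  derivable (fun s => proj_box xs (x s) (y s)) t 1 ->
  (grad_dot f (x t) (derive1 x t) + grad_dot f (y t) (derive1 y t)) / 2
    + grad_dot f (proj_box xs (x t) (y t)) (derive1 (fun s => proj_box xs (x s) (y s)) t)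
    >= 0.
Proof.
move=> f0 df DR bxs fmax hbx hby xy dX dY H dP.
have xp : vle (x t) (proj_box xs (x t) (y t)).
  by move=> j; rewrite mxE; case/andP: (@clamp_in _ (xs ord0 j) _ _ (xy j)).
have py : vle (proj_box xs (x t) (y t)) (y t).
  by move=> j; rewrite mxE; case/andP: (@clamp_in _ (xs ord0 j) _ _ (xy j)).
have bp : in_box (proj_box xs (x t) (y t)).
  move=> j; have := xp j; have := py j; have := hbx j; have := hby j.
  move=> /andP[? ?] /andP[? ?] ? ?; apply/andP; split; lra.
rewrite /grad_dot -big_split /= mulr_suml -big_split /=.
apply: sumr_ge0 => i _.
apply: (@coord_ineq _ _ _ _ _ _ _ (H i)).
- move=> _; apply/andP; split.
  + exact: (@mono _ _ _ _ _ i DR df bp hby py).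
  + exact: (@mono _ _ _ _ _ i DR df hbx bp xp).
- exact: (@pbound _ _ _ _ _ _ _ dX dY dP _ _ _ erefl erefl erefl).
Qed.
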